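(* Let $K$ be a field, $N\ge 2$, $N_1,\dots,N_N\ge 1$, and for $1\le i\le N$, $1\le j\le N_i$ let $L_{i,j}=a_ix+b_iy+c_{i,j}\in K[x,y]$ be non-constant polynomials such that the lines $L_{i,j}=0$ in the affine plane are pairwise distinct, and lines with different first index are not parallel. Then for every $\lambda\in K^*$ the polynomial $$f(x,y)=\lambda\prod_{i=1}^N\prod_{j=1}^{N_i}L_{i,j}-1$$ is irreducible in $K[x,y]$; in particular the affine curve $f(x,y)=0$ is irreducible.
   Context: Note that all lines with the same first index $i$ are parallel (they share the coefficients $a_i,b_i$); ''not parallel for distinct $i$'' means $a_ib_k-a_kb_i\neq 0$ for $i\neq k$. *)

(* Defs.v *)
(* K[x,y] is modelled as {poly {poly K}} = (K[y])[x]: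
   the outer indeterminate 'X is x, and the inner one ('X)%:P is y. *)
From HB Require Import structures.
From mathcomp Require Import all_boot all_order all_algebra.
Set Implicit Arguments. Unset Strict Implicit. Unset Printing Implicit Defensive.
Import Order.TTheory GRing.Theory Num.Theory.
Local Open Scope ring_scope.

Definition varx (K : fieldType) : {poly {poly K}} := 'X.
Definition vary (K : fieldType) : {poly {poly K}} := ('X : {poly K})%:P.
Definition cst2 (K : fieldType) (c : K) : {poly {poly K}} := c%:P%:P.

Definition irreducible2 (K : fieldType) (f : {poly {poly K}}) : Prop :=
  [/\ f != 0, f \isn't a GRing.unit &
      forall g h : {poly {poly K}}, f = g * h ->
        g \is a GRing.unit \/ h \is a GRing.unit].

Definition linepoly (K : fieldType) (a b c : K) : {poly {poly K}} :=
  cst2 a * varx K + cst2 b * vary K + cst2 c.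

(* Main.v *)
Require Import Defs.
From HB Require Import structures.
From mathcomp Require Import all_boot all_order all_algebra.
From mathcomp Require Import ring lra zify.
Import GRing.Theory.
Local Open Scope ring_scope.
Set Implicit Arguments. Unset Strict Implicit.

Definition ev (K : fieldType) (x0 y0 : K) (p : {poly {poly K}}) : K := (p.[x0%:P]).[y0].

Lemma evM (K : fieldType) (x0 y0 : K) p q : ev x0 y0 (p * q) = ev x0 y0 p * ev x0 y0 q.
Proof. by rewrite /ev !hornerM. Qed.
Lemma evB (K : fieldType) (x0 y0 : K) p q : ev x0 y0 (p - q) = ev x0 y0 p - ev x0 y0 q.
Proof. by rewrite /ev !hornerE. Qed.
Lemma ev_cst2 (K : fieldType) (x0 y0 k : K) : ev x0 y0 (cst2 k) = k.
Proof. by rewrite /ev /cst2 !hornerC. Qed.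
Lemma ev_line (K : fieldType) (x0 y0 a b c : K) :
  ev x0 y0 (linepoly a b c) = a * x0 + b * y0 + c.
Proof. by rewrite /ev /linepoly /cst2 /varx /vary !hornerE. Qed.

Definition restr (K : fieldType) (a b c : K) (p : {poly {poly K}}) : {poly K} :=
  if a != 0 then p.[- ((a^-1*b)%:P * 'X + (a^-1*c)%:P)]
  else map_poly (horner_eval (-(b^-1*c))) p.

Lemma restrM (K : fieldType) (a b c : K) p q : restr a b c (p * q) = restr a b c p * restr a b c q.
Proof. rewrite /restr; case: ifP => _; [by rewrite hornerM | by rewrite rmorphM]. Qed.
Lemma restrB (K : fieldType) (a b c : K) p q : restr a b c (p - q) = restr a b c p - restr a b c q.
Proof. rewrite /restr; case: ifP => _; [by rewrite hornerD hornerN | by rewrite rmorphB]. Qed.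
Lemma restrD (K : fieldType) (a b c : K) p q : restr a b c (p + q) = restr a b c p + restr a b c q.
Proof. rewrite /restr; case: ifP => _; [by rewrite hornerD | by rewrite rmorphD]. Qed.
Lemma restr_cst2 (K : fieldType) (a b c k : K) : restr a b c (cst2 k) = k%:P.
Proof. rewrite /restr /cst2; case: ifP => _; [by rewrite hornerC | by rewrite map_polyC /= /horner_eval hornerC]. Qed.

Lemma line_fact (K : fieldType) (a b c : K) : a != 0 ->
  linepoly a b c = cst2 a * ('X - (- ((a^-1*b)%:P * 'X + (a^-1*c)%:P))%:P).
Proof.
move=> ha; rewrite /linepoly /cst2 /varx /vary.
have hA : (a%:P%:P : {poly {poly K}}) * a^-1%:P%:P = 1 by rewrite -!rmorphM mulfV // !rmorph1.
rewrite !(rmorphN, rmorphD, rmorphM) /=.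
transitivity (a%:P%:P * 'X + (a%:P%:P * a^-1%:P%:P) * (b%:P%:P * 'X%:P) + (a%:P%:P * a^-1%:P%:P) * c%:P%:P : {poly {poly K}}).
  by rewrite hA !mul1r.
ring.
Qed.

Lemma line_fact0 (K : fieldType) (b c : K) : b != 0 ->
  linepoly 0 b c = cst2 b * ('X - (-(b^-1*c))%:P)%:P.
Proof.
move=> hb; rewrite /linepoly /cst2 /varx /vary.
have hA : (b%:P%:P : {poly {poly K}}) * b^-1%:P%:P = 1 by rewrite -!rmorphM mulfV // !rmorph1.
rewrite !(rmorphN, rmorphD, rmorphM, rmorphB) /= !rmorph0 mul0r add0r.
transitivity ((b%:P%:P * 'X%:P) + (b%:P%:P * b^-1%:P%:P) * c%:P%:P : {poly {poly K}}).
  by rewrite hA !mul1r.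
ring.
Qed.

Lemma restr_line (K : fieldType) (a b c : K) : (a != 0) || (b != 0) ->
  restr a b c (linepoly a b c) = 0.
Proof.
rewrite /restr; case: ifP => ha /=.
  by rewrite line_fact // hornerM hornerXsubC subrr mulr0.
move/negbFE: ha => /eqP -> hb; rewrite line_fact0 // rmorphM /= !map_polyC /= /horner_eval.
by rewrite hornerXsubC subrr mulr0.
Qed.

Lemma restr_ker (K : fieldType) (a b c : K) p : (a != 0) || (b != 0) ->
  restr a b c p = 0 -> exists q, p = q * linepoly a b c.
Proof.
rewrite /restr; case: ifP => ha /=.
  move=> _ /eqP hr; have /factor_theorem [q ->] : root p (- ((a^-1*b)%:P * 'X + (a^-1*c)%:P)) by [].
  exists (q * cst2 a^-1); rewrite line_fact // mulrA -(mulrA q) /cst2 -!rmorphM mulVf // !rmorph1 mulr1 //.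
move/negbFE: ha => /eqP -> hb hr.
set d := ('X - (-(b^-1*c))%:P : {poly K}).
exists (map_poly (fun r => r %/ d) p * cst2 b^-1).
rewrite line_fact0 // mulrA -(mulrA _ (cst2 b^-1)) /cst2 -!rmorphM mulVf // !rmorph1 mulr1.
apply/polyP => i; rewrite coefMC coef_map_id0 ?div0p // divpK //.
rewrite dvdp_XsubCl /root; apply/eqP.
by move/polyP: hr => /(_ i); rewrite coef_map /= /horner_eval coef0.
Qed.

Lemma line_neq0 (K : fieldType) (a b c : K) : (a != 0) || (b != 0) -> linepoly a b c != 0.
Proof.
case/orP => h.
  apply/eqP => e; have := ev_line ((1 - c) / a) 0 a b c; rewrite e /ev !horner0 => /eqP.
  by rewrite eq_sym mulr0 addr0 mulrCA mulfV // mulr1 subrK oner_eq0.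
apply/eqP => e; have := ev_line 0 ((1 - c) / b) a b c; rewrite e /ev !horner0 => /eqP.
by rewrite eq_sym mulr0 add0r mulrCA mulfV // mulr1 subrK oner_eq0.
Qed.

Lemma unit_const (K : fieldType) (u v : {poly K}) : u * v = -1 -> u = (u`_0)%:P /\ u`_0 != 0.
Proof.
move=> e.
have u0 : u != 0 by apply/eqP => u0; move: e; rewrite u0 mul0r => /eqP; rewrite eq_sym oppr_eq0 oner_eq0.
have v0 : v != 0 by apply/eqP => v0; move: e; rewrite v0 mulr0 => /eqP; rewrite eq_sym oppr_eq0 oner_eq0.
have hs : size (u * v) = size (-1 : {poly K}) by rewrite e.
rewrite size_mul // size_polyN size_poly1 in hs.
have su : size u = 1%N.
  have h1 : (0 < size u)%N by rewrite size_poly_gt0.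
  have h2 : (0 < size v)%N by rewrite size_poly_gt0.
  have : (size u + size v = 2)%N by move: hs; case: (size u + size v)%N => [|[|[|n]]] //=.
  lia.
have hu : u = (u`_0)%:P by apply: size1_polyC; rewrite su.
split=> //; apply: contra u0 => /eqP h; by rewrite hu h.
Qed.

Lemma inter (K : fieldType) (a b c a' b' c' : K) : a * b' - a' * b != 0 ->
  exists x0 y0, a * x0 + b * y0 + c = 0 /\ a' * x0 + b' * y0 + c' = 0.
Proof.
move=> hD; exists ((b * c' - b' * c) / (a * b' - a' * b)), ((a' * c - a * c') / (a * b' - a' * b)).
split; field; done.
Qed.

Lemma prod_div (K : fieldType) (T : eqType) (s : seq T) (F : T -> {poly {poly K}})
  (R : T -> {poly {poly K}} -> {poly K}) (p : {poly {poly K}}) :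
  uniq s ->
  (forall t p q, R t (p * q) = R t p * R t q) ->
  (forall t t', t \in s -> t' \in s -> t != t' -> R t (F t') != 0) ->
  (forall t p, t \in s -> R t p = 0 -> exists q, p = q * F t) ->
  (forall t, t \in s -> R t p = 0) ->
  exists q, p = q * \prod_(t <- s) F t.
Proof.
move=> + RM.
elim: s p => [|t0 s IH] p /=.
  by move=> *; exists p; rewrite big_nil mulr1.
case/andP => t0s us Hsep Hker Hp.
have [q pq] := Hker t0 p (mem_head _ _) (Hp t0 (mem_head _ _)).
have [q' qq'] : exists q', q = q' * \prod_(t <- s) F t.
  apply: IH => //.
  - by move=> t t' ht ht' tt'; apply: Hsep; rewrite ?inE ?ht ?ht' ?orbT.
  - by move=> t p0 ht; apply: Hker; rewrite inE ht orbT.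
  move=> t ht; have := Hp t; rewrite inE ht orbT => /(_ isT).
  rewrite pq RM => /eqP; rewrite mulf_eq0 => /orP [/eqP //|].
  have tt0 : t != t0 by apply: contraNneq t0s => <-.
  by move: (Hsep t t0); rewrite inE ht orbT mem_head => /(_ isT isT tt0) /negPf ->.
by exists q'; rewrite pq qq' big_cons -mulrA (mulrC (F t0)).
Qed.

Lemma line_shift (K : fieldType) (a b c c' : K) :
  linepoly a b c' = linepoly a b c + cst2 (c' - c).
Proof. rewrite /linepoly /cst2 !rmorphB /=; ring. Qed.

Lemma line_sep_same (K : fieldType) (a b c c' : K) : (a != 0) || (b != 0) -> c != c' ->
  restr a b c (linepoly a b c') != 0.
Proof.
move=> hn hc; rewrite (line_shift a b c) restrD restr_line // add0r restr_cst2.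
by rewrite polyC_eq0 subr_eq0 eq_sym.
Qed.

Lemma line_sep_diff (K : fieldType) (a b c a' b' c' : K) : (a != 0) || (b != 0) ->
  a * b' - a' * b != 0 -> restr a b c (linepoly a' b' c') != 0.
Proof.
move=> hn hD; apply/eqP => /(restr_ker hn) [q e].
have [x0 [y0 [h1 h2]]] := inter c c' hD.
have := congr1 (ev (x0 - b) (y0 + a)) e.
rewrite evM !ev_line.
have -> : a * (x0 - b) + b * (y0 + a) + c = a * x0 + b * y0 + c by ring.
rewrite h1.
rewrite mulr0 => /eqP; apply/negP.
have -> : a' * (x0 - b) + b' * (y0 + a) + c' = a * b' - a' * b + (a' * x0 + b' * y0 + c') by ring.
rewrite h2 addr0.
exact: hD.
Qed.

Lemma size_line (K : fieldType) (a b c : K) : a != 0 -> size (linepoly a b c) = 2%N.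
Proof.
move=> ha.
have -> : linepoly a b c = (a%:P)%:P * 'X + (b%:P * 'X + c%:P)%:P.
  by rewrite /linepoly /cst2 /varx /vary rmorphD rmorphM /= addrA.
by rewrite size_MXaddC !polyC_eq0 (negPf ha) /= size_polyC polyC_eq0 ha.
Qed.

Unset Implicit Arguments.

Theorem lemma2p1 (K : fieldType) (N : nat) (Ns : 'I_N -> nat)
  (a b : 'I_N -> K) (c : forall i : 'I_N, 'I_(Ns i) -> K)
  (hN : (2 <= N)%N)
  (hNs : forall i, (1 <= Ns i)%N)
  (hnc : forall i, (a i != 0) || (b i != 0))
  (hdist : forall (i : 'I_N) (j j' : 'I_(Ns i)), j != j' -> c i j != c i j')
  (hpar : forall i k : 'I_N, i != k -> a i * b k - a k * b i != 0)
  (lam : K) (hlam : lam != 0) :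
  irreducible2
    (cst2 lam * \prod_(i < N) \prod_(j < Ns i) linepoly (a i) (b i) (c i j) - 1).
Proof.
pose T := {i : 'I_N & 'I_(Ns i)}.
pose L := fun (u : T) => linepoly (a (tag u)) (b (tag u)) (c (tag u) (tagged u)).
pose Rr := fun (u : T) => restr (a (tag u)) (b (tag u)) (c (tag u) (tagged u)).
have PE : \prod_(i < N) \prod_(j < Ns i) linepoly (a i) (b i) (c i j) = \prod_(u : T) L u.
  by rewrite (sig_big_dep xpredT (fun _ => xpredT)).
rewrite PE; set P := \prod_(u : T) L u.
have hnd : forall u : T, (a (tag u) != 0) || (b (tag u) != 0) := fun u => hnc _.
have RL : forall u, Rr u (L u) = 0 := fun u => restr_line _ (hnd u).
have RP : forall u, Rr u P = 0.
  by move=> u; rewrite /P (bigD1 u) //= /Rr restrM -/(Rr u) RL mul0r.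
have Lnz : forall u, L u != 0 := fun u => line_neq0 _ (hnd u).
have Pnz : P != 0 by apply/prodf_neq0 => u _; exact: Lnz.
have h0N : (0 < N)%N by apply: leq_trans hN.
pose i1 : 'I_N := Ordinal h0N.
pose i2 : 'I_N := Ordinal hN.
have i12 : i1 != i2 by [].
pose j0 := fun i : 'I_N => (Ordinal (hNs i) : 'I_(Ns i)).
have hsize : (2 <= size P)%N.
  have [i ai] : exists i, a i != 0.
    case: (eqVneq (a i1) 0) => h1; last by exists i1.
    case: (eqVneq (a i2) 0) => h2; last by exists i2.
    by move: (hpar i1 i2 i12); rewrite h1 h2 !mul0r subrr eqxx.
  pose u : T := Tagged (fun i => 'I_(Ns i)) (j0 i).
  move: Pnz; rewrite /P (bigD1 u) //= => Pnz.
  have rnz : \prod_(v | v != u) L v != 0 by move: Pnz; rewrite mulf_eq0 negb_or => /andP [].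
  rewrite size_mul ?Lnz // size_line //.
  by move: rnz; rewrite -size_poly_gt0; case: (size _).
have sep : forall u v : T, u != v -> Rr u (L v) != 0.
  move=> [i j] [k l] uv; rewrite /Rr /L /=.
  case: (eqVneq i k) => ik.
    subst k; apply: line_sep_same => //; apply: hdist.
    by apply: contra uv => /eqP ->.
  by apply: line_sep_diff => //; apply: hpar.
have gen : forall g h, g * h = cst2 lam * P - 1 -> exists C r, C != 0 /\ g = cst2 C + P * r.
  move=> g h e.
  have Rf : forall u, Rr u g * Rr u h = -1.
    move=> u; rewrite /Rr -restrM e restrB restrM (_ : 1 = cst2 1) ?restr_cst2; last by rewrite /cst2 !rmorph1.
    by rewrite -/(Rr u) RP mulr0 sub0r.
  pose cg := fun u => (Rr u g)`_0.
  have cgE : forall u, Rr u g = (cg u)%:P /\ cg u != 0 := fun u => unit_const (Rf u).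
  have evg : forall (u : T) x0 y0, a (tag u) * x0 + b (tag u) * y0 + c (tag u) (tagged u) = 0 ->
      ev x0 y0 g = cg u.
    move=> u x0 y0 hxy.
    have : Rr u (g - cst2 (cg u)) = 0 by rewrite /Rr restrB restr_cst2 -/(Rr u) (cgE u).1 subrr.
    case/(restr_ker (hnd u)) => q eq.
    have := congr1 (ev x0 y0) eq; rewrite evB ev_cst2 evM ev_line hxy mulr0 => /eqP.
    by rewrite subr_eq0 => /eqP.
  have cross : forall u v : T, tag u != tag v -> cg u = cg v.
    move=> u v tuv.
    have [x0 [y0 [h1 h2]]] := inter (c (tag u) (tagged u)) (c (tag v) (tagged v)) (hpar _ _ tuv).
    by rewrite -(evg u x0 y0 h1) -(evg v x0 y0 h2).
  pose u1 : T := Tagged (fun i => 'I_(Ns i)) (j0 i1).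
  pose u2 : T := Tagged (fun i => 'I_(Ns i)) (j0 i2).
  have allC : forall u, cg u = cg u1.
    move=> u; case: (eqVneq (tag u) i1) => hu; last exact: cross.
    by rewrite (cross u u2) ?hu // (cross u2 u1).
  have [q hq] := @prod_div K T (index_enum T) L Rr (g - cst2 (cg u1)) (index_enum_uniq _)
    (fun t => @restrM K _ _ _)
    (fun t t' _ _ h => sep t t' h)
    (fun t p _ h => restr_ker (hnd t) h)
    (fun t _ => ltac:(by rewrite /Rr restrB restr_cst2 -/(Rr t) (cgE t).1 allC subrr)).
  exists (cg u1), q; split; first exact: (cgE u1).2.
  by rewrite mulrC -hq addrC subrK.
have sf : (2 <= size (cst2 lam * P - 1)%R)%N.
  have s1 : size (cst2 lam * P) = size P.
    by rewrite size_mul ?polyC_eq0 // /cst2 size_polyC polyC_eq0 hlam.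
  rewrite size_polyDl s1 // size_polyN size_poly1; lia.
split.
- by rewrite -size_poly_gt0; lia.
- by rewrite poly_unitE; apply/negP => /andP [/eqP h _]; move: sf; rewrite h.
move=> g h e.
have [C [r [C0 hg]]] := gen g h (esym e).
have [D [s [D0 hh]]] := gen h g ltac:(by rewrite mulrC -e).
have cunit : forall E : K, E != 0 -> cst2 E \is a GRing.unit.
  move=> E E0; rewrite poly_unitE /cst2 size_polyC polyC_eq0 E0 /= coefC /=.
  by rewrite poly_unitE size_polyC E0 /= coefC /= unitfE.
case: (eqVneq r 0) => r0; first by left; rewrite hg r0 mulr0 addr0 cunit.
case: (eqVneq s 0) => s0; first by right; rewrite hh s0 mulr0 addr0 cunit.
exfalso.
pose E := cst2 lam - cst2 C * s - cst2 D * r - P * r * s.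
have key : P * E = cst2 (C * D + 1).
  apply/eqP; rewrite -subr_eq0; apply/eqP.
  have e' : cst2 lam * P - 1 - (cst2 C + P * r) * (cst2 D + P * s) = 0 by rewrite e hg hh subrr.
  rewrite -e' /E /cst2 rmorphD rmorphM rmorph1 rmorphD rmorphM rmorph1 /=; ring.
case: (eqVneq E 0) => E0.
  have hE : P * r * s = cst2 lam - cst2 C * s - cst2 D * r.
    by apply/eqP; rewrite eq_sym -subr_eq0; apply/eqP; rewrite -E0.
  have hr : (0 < size r)%N by rewrite size_poly_gt0.
  have hs : (0 < size s)%N by rewrite size_poly_gt0.
  have sl : size (P * r * s)%R = (size P + size r + size s - 2)%N.
    rewrite size_mul ?mulf_neq0 // size_mul // -!subn1.
    move: (size P) (size r) (size s) hr hs => x y z h1 h2; lia.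
  have sr : (size (cst2 lam - cst2 C * s - cst2 D * r)%R <= maxn 1 (maxn (size s) (size r)))%N.
    have t1 := size_polyD (cst2 lam - cst2 C * s) (- (cst2 D * r)).
    have t2 := size_polyD (cst2 lam) (- (cst2 C * s)).
    have t3 := size_polyMleq (cst2 C) s.
    have t4 := size_polyMleq (cst2 D) r.
    have t5 : (size (cst2 lam) <= 1)%N := size_polyC_leq1 (lam%:P).
    have t6 : (size (cst2 C) <= 1)%N := size_polyC_leq1 (C%:P).
    have t7 : (size (cst2 D) <= 1)%N := size_polyC_leq1 (D%:P).
    rewrite !size_polyN in t1 t2; rewrite -subn1 in t3; rewrite -subn1 in t4.
    move: t1 t2 t3 t4 t5 t6 t7 hr hs.
    move: (size (cst2 lam - cst2 C * s - cst2 D * r)) (size (cst2 lam - cst2 C * s))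
      (size (cst2 D * r)) (size (cst2 lam)) (size (cst2 C * s)) (size (cst2 C))
      (size (cst2 D)) (size s) (size r) => *; lia.
  move: sr; rewrite -hE sl.
  move: (size P) (size r) (size s) hr hs hsize => x y z h1 h2 h3 h4; lia.
have : size (P * E) = size (cst2 (C * D + 1)) by rewrite key.
rewrite size_mul // -subn1.
have : (size (cst2 (C * D + 1)) <= 1)%N := size_polyC_leq1 ((C * D + 1)%:P).
have : (0 < size E)%N by rewrite size_poly_gt0.
move: (size E) (size P) (size (cst2 (C * D + 1))) hsize => x y z h1 h2 h3 h4; lia.
Qed.
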